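(* Let $0<d<\pi/2$, $\mathscr{D}_d=\{\zeta\in\mathbb{C}:|\Im\zeta|<d\}$, $\mathscr{D}_d^{-}=\{\zeta\in\mathscr{D}_d:\Re\zeta<0\}$, $\mathscr{D}_d^{+}=\{\zeta\in\mathscr{D}_d:\Re\zeta\ge0\}$. Assume $f$ is analytic on $\sinh(\mathscr{D}_d)$ and there are constants $K,\alpha,\beta>0$ with $|f(z)|\le K|1+z^2|^{-(\alpha+1)/2}$ for all $z\in\sinh(\mathscr{D}_d^-)$ and $|f(z)|\le K|1+z^2|^{-(\beta+1)/2}$ for all $z\in\sinh(\mathscr{D}_d^+)$. Let $\mu=\min\{\alpha,\beta\}$, $\nu=\max\{\alpha,\beta\}$. Then $F(\zeta)=f(\sinh\zeta)\cosh\zeta$ belongs to $\mathbf{L}^{\mathrm{SE}}_{L,R,\alpha,\beta}(\mathscr{D}_d)$ with $L=2^{\nu}K/(\cos d)^{(\nu-\mu)/2}$ and $R=2^{\nu}K$.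
   Context: For positive $L,R,\alpha,\beta$ and $0<d<\pi/2$, $\mathbf{L}^{\mathrm{SE}}_{L,R,\alpha,\beta}(\mathscr{D}_d)$ is the set of functions $F$ analytic on $\mathscr{D}_d$ such that for all $\zeta\in\mathscr{D}_d$, $|F(\zeta)|\le L\,|1+e^{-2\zeta}|^{-\alpha/2}|1+e^{2\zeta}|^{-\beta/2}$, and for all $x\in\mathbb{R}$, $|F(x)|\le R\,(1+e^{-2x})^{-\alpha/2}(1+e^{2x})^{-\beta/2}$. *)

(* Defs.v *)
From Stdlib Require Import Reals Lra.
From Coquelicot Require Import Coquelicot.
Open Scope R_scope.

Definition cexp (z : C) : C :=
  (exp (Re z) * cos (Im z), exp (Re z) * sin (Im z)).
Definition csinh (z : C) : C := ((cexp z - cexp (- z)) / 2)%C.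
Definition ccosh (z : C) : C := ((cexp z + cexp (- z)) / 2)%C.

Definition C_differentiable (f : C -> C) (z : C) : Prop :=
  @ex_derive C_AbsRing C_NormedModule f z.

Definition strip (d : R) (z : C) : Prop := Rabs (Im z) < d.
Definition strip_minus (d : R) (z : C) : Prop := strip d z /\ Re z < 0.
Definition strip_plus (d : R) (z : C) : Prop := strip d z /\ 0 <= Re z.

Definition LSE (L Rc alpha beta d : R) (F : C -> C) : Prop :=
  (forall zeta, strip d zeta -> C_differentiable F zeta) /\
  (forall zeta, strip d zeta ->
     Cmod (F zeta) <=
       L * Rpower (Cmod (1 + cexp (-2 * zeta))) (- alpha / 2)
         * Rpower (Cmod (1 + cexp (2 * zeta))) (- beta / 2)) /\
  (forall x : R,
     Cmod (F (RtoC x)) <=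
       Rc * Rpower (1 + exp (-2 * x)) (- alpha / 2)
          * Rpower (1 + exp (2 * x)) (- beta / 2)).

(* Main.v *)
Require Import Defs.
From Stdlib Require Import Reals Lra.
From Coquelicot Require Import Coquelicot.
Open Scope R_scope.

Lemma small_o (f : R -> R) l x0 : derivable_pt_lim f x0 l ->
  forall eps, 0 < eps -> exists delta, 0 < delta /\
    forall h, Rabs h < delta -> Rabs (f (x0 + h) - f x0 - l * h) <= eps * Rabs h.
Proof.
  intros Hd eps He. destruct (Hd eps He) as [[delta Hdel] H].
  exists delta; split; [exact Hdel|]. intros h Hh.
  destruct (Req_dec h 0) as [->|Hn].
  { rewrite Rplus_0_r, Rabs_R0. replace (f x0 - f x0 - l * 0) with 0 by ring.
    rewrite Rabs_R0; lra. }
  specialize (H h Hn Hh).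
  replace (f (x0 + h) - f x0 - l * h) with (((f (x0 + h) - f x0) / h - l) * h)
    by (field; exact Hn).
  rewrite Rabs_mult. apply Rmult_le_compat_r; [apply Rabs_pos| lra].
Qed.

Lemma Cmod_le_2 (z : C) : Cmod z <= 2 * (Rabs (fst z) + Rabs (snd z)).
Proof.
  eapply Rle_trans; [apply Cmod_2Rmax|].
  assert (sqrt 2 < 2).
  { rewrite <- (sqrt_square 2) at 2 by lra. apply sqrt_lt_1; lra. }
  assert (0 <= sqrt 2) by apply sqrt_pos.
  unfold Rmax; destruct Rle_dec;
  pose proof (Rabs_pos (fst z)); pose proof (Rabs_pos (snd z)); nra.
Qed.

Lemma cexp_lim0 eps : 0 < eps -> exists delta, 0 < delta /\
  forall h, Cmod h < delta -> Cmod (cexp h - 1 - h)%C <= eps * Cmod h.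
Proof.
  intros He.
  set (e1 := Rmin 1 (eps / 20)).
  assert (He1 : 0 < e1) by (unfold e1; apply Rmin_glb_lt; lra).
  assert (He1' : e1 <= eps / 20) by apply Rmin_r.
  assert (He1'' : e1 <= 1) by apply Rmin_l.
  destruct (small_o exp 1 0 derivable_pt_lim_exp_0 e1 He1) as [d1 [Hd1 H1]].
  destruct (small_o cos (- sin 0) 0 (derivable_pt_lim_cos 0) e1 He1) as [d2 [Hd2 H2]].
  destruct (small_o sin (cos 0) 0 (derivable_pt_lim_sin 0) e1 He1) as [d3 [Hd3 H3]].
  rewrite sin_0 in H2. rewrite cos_0 in H3.
  exists (Rmin (Rmin d1 d2) (Rmin d3 e1)). split.
  { repeat apply Rmin_glb_lt; lra. }
  intros [a b] Hh.
  assert (Ha : Rabs a <= Cmod (a, b)).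
  { eapply Rle_trans; [|apply (Rmax_Cmod (a,b))]; apply Rmax_l. }
  assert (Hb : Rabs b <= Cmod (a, b)).
  { eapply Rle_trans; [|apply (Rmax_Cmod (a,b))]; apply Rmax_r. }
  assert (Hm1 := Rmin_l (Rmin d1 d2) (Rmin d3 e1)).
  assert (Hm2 := Rmin_r (Rmin d1 d2) (Rmin d3 e1)).
  assert (Hm3 := Rmin_l d1 d2). assert (Hm4 := Rmin_r d1 d2).
  assert (Hm5 := Rmin_l d3 e1). assert (Hm6 := Rmin_r d3 e1).
  specialize (H1 a ltac:(lra)). specialize (H2 b ltac:(lra)). specialize (H3 b ltac:(lra)).
  rewrite !Rplus_0_l, exp_0 in H1. rewrite !Rplus_0_l, cos_0 in H2. rewrite !Rplus_0_l, sin_0 in H3.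
  eapply Rle_trans; [apply Cmod_le_2|].
  unfold cexp; simpl.
  set (E := exp a). set (c := cos b). set (s := sin b).
  change (exp a) with E in H1. change (cos b) with c in H2. change (sin b) with s in H3.
  assert (e1 * Rabs a <= e1 * Cmod (a,b)) by (apply Rmult_le_compat_l; lra).
  assert (e1 * Rabs b <= e1 * Cmod (a,b)) by (apply Rmult_le_compat_l; lra).
  assert (e1 * Rabs b <= Rabs b) by (pose proof (Rabs_pos b); nra).
  assert (e1 * Rabs a <= Rabs a) by (pose proof (Rabs_pos a); nra).
  assert (HE : E <= 3).
  { unfold E. apply Rle_trans with (exp 1); [|apply exp_le_3].
    destruct (Req_dec a 1) as [->|]; [lra|]. left; apply exp_increasing.
    pose proof (Rle_abs a); lra. }
  assert (HE0 : 0 < E) by apply exp_pos.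
  assert (R1 : Rabs (E * c - 1 - a) <= 4 * e1 * Cmod (a, b)).
  { replace (E * c - 1 - a) with (E * (c - 1 - - 0 * b) + (E - 1 - 1 * a)) by ring.
    eapply Rle_trans; [apply Rabs_triang|]. rewrite Rabs_mult, (Rabs_right E) by lra.
    assert (E * Rabs (c - 1 - - 0 * b) <= 3 * (e1 * Rabs b)).
    { apply Rmult_le_compat; [lra|apply Rabs_pos|lra|exact H2]. }
    nra. }
  assert (Hs : Rabs s <= 2 * Rabs b).
  { replace s with ((s - 0 - 1 * b) + b) by ring.
    eapply Rle_trans; [apply Rabs_triang|]. nra. }
  assert (HE1 : Rabs (E - 1) <= 2 * Rabs a).
  { replace (E - 1) with ((E - 1 - 1 * a) + a) by ring.
    eapply Rle_trans; [apply Rabs_triang|]. nra. }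
  assert (R2 : Rabs (E * s - 0 - b) <= 5 * e1 * Cmod (a, b)).
  { replace (E * s - 0 - b) with ((E - 1) * s + (s - 0 - 1 * b)) by ring.
    eapply Rle_trans; [apply Rabs_triang|]. rewrite Rabs_mult.
    assert (Rabs (E - 1) * Rabs s <= 4 * Rabs a * Rabs b).
    { apply Rle_trans with (2 * Rabs a * (2 * Rabs b)); [|lra].
      apply Rmult_le_compat; try apply Rabs_pos; lra. }
    assert (Rabs a * Rabs b <= e1 * Cmod (a, b)).
    { apply Rmult_le_compat; try apply Rabs_pos; lra. }
    nra. }
  assert (0 <= Cmod (a, b)) by apply Cmod_ge_0.
  match goal with |- 2 * (Rabs ?X + Rabs ?Y) <= _ =>
    replace X with (E * c - 1 - a) by (unfold E, c; ring);
    replace Y with (E * s - 0 - b) by (unfold E, s; ring) end.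
  nra.
Qed.

Lemma cexp_add z w : cexp (z + w)%C = (cexp z * cexp w)%C.
Proof.
  destruct z as [a b], w as [c d]. unfold cexp, Cmult, Cplus; simpl.
  rewrite exp_plus, cos_plus, sin_plus. f_equal; ring.
Qed.

Lemma Cmod_cexp z : Cmod (cexp z) = exp (Re z).
Proof.
  destruct z as [a b]; unfold cexp, Cmod; simpl.
  assert (Hsc : sin b * sin b + cos b * cos b = 1).
  { pose proof (sin2_cos2 b) as H. unfold Rsqr in H. exact H. }
  match goal with |- sqrt ?X = _ =>
    replace X with (exp a ^ 2 * (sin b * sin b + cos b * cos b)) by ring end.
  rewrite Hsc, Rmult_1_r. apply sqrt_pow2. left; apply exp_pos.
Qed.

Lemma is_derive_cexp z : is_derive cexp z (cexp z).
Proof.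
  split; [apply is_linear_scal_l|].
  intros x Hx. apply (is_filter_lim_locally_unique (K:=C_AbsRing) (V:=AbsRing_NormedModule C_AbsRing)) in Hx. subst x.
  intros eps.
  set (M := exp (Re z)).
  assert (HM : 0 < M) by apply exp_pos.
  destruct (cexp_lim0 (eps / M)) as [delta [Hd H]].
  { apply Rdiv_lt_0_compat; [apply cond_pos|exact HM]. }
  exists (mkposreal (delta / 2) ltac:(lra)). intros y Hy.
  change (Cmod (minus y z) < delta / 2) in Hy.
  assert (Hs : sqrt 2 < 2).
  { rewrite <- (sqrt_square 2) at 2 by lra. apply sqrt_lt_1; lra. }
  assert (Hy' : Cmod (minus y z) < delta) by (pose proof (sqrt_pos 2); nra).
  set (h := minus y z) in *.
  assert (Hyz : y = (z + h)%C).
  { unfold h. assert (Hg : forall a b : C, b = (a + (b - a))%C) by (intros; ring). apply Hg. }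
  specialize (H h Hy').
  change (Cmod (minus (minus (cexp y) (cexp z)) (scal h (cexp z))) <= eps * Cmod h).
  replace (minus (minus (cexp y) (cexp z)) (scal h (cexp z))) with (cexp z * (cexp h - 1 - h))%C.
  2:{ rewrite Hyz, cexp_add.
        assert (Hg : forall E H h : C, (E*(H-1-h))%C = (E*H - E - h*E)%C) by (intros; ring).
        apply Hg. }
  rewrite Cmod_mult, Cmod_cexp. fold M.
  replace (eps * Cmod h) with (M * (eps / M * Cmod h)) by (field; lra).
  apply Rmult_le_compat_l; lra.
Qed.

Lemma tr1 (f : C -> C) z l : @is_derive C_AbsRing C_NormedModule f z l ->
  @is_derive C_AbsRing (AbsRing_NormedModule C_AbsRing) f z l.
Proof. intros [[H1 H2 H3] H4]. split; [constructor; assumption| exact H4]. Qed.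

Lemma tr2 (f : C -> C) z l : @is_derive C_AbsRing (AbsRing_NormedModule C_AbsRing) f z l ->
  @is_derive C_AbsRing C_NormedModule f z l.
Proof. intros [[H1 H2 H3] H4]. split; [constructor; assumption| exact H4]. Qed.

Lemma exd_mult (f g : C -> C) z : C_differentiable f z -> C_differentiable g z ->
  C_differentiable (fun x => f x * g x)%C z.
Proof.
  intros [lf Hf] [lg Hg].
  eexists. apply tr2, (is_derive_mult (K := C_AbsRing) f g z lf lg (tr1 _ _ _ Hf) (tr1 _ _ _ Hg)).
  intros; apply Cmult_comm.
Qed.

Lemma exd_const (c : C) z : C_differentiable (fun _ => c) z.
Proof. eexists. apply tr2, (is_derive_const (K := C_AbsRing)). Qed.

Lemma exd_cexp z : C_differentiable cexp z.
Proof. eexists. apply is_derive_cexp. Qed.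

Lemma exd_cexp_opp z : C_differentiable (fun x => cexp (- x)%C) z.
Proof.
  apply (ex_derive_comp (K := C_AbsRing) (V := C_NormedModule) cexp (fun x => (-x)%C)).
  - apply exd_cexp.
  - destruct (ex_derive_opp (K := C_AbsRing) (V := AbsRing_NormedModule C_AbsRing) (fun t => t) z (ex_derive_id z)) as [l Hl].
    exists l. exact Hl.
Qed.

Lemma exd_csinh z : C_differentiable csinh z.
Proof.
  unfold csinh. apply exd_mult; [|apply exd_const].
  apply (ex_derive_minus (K := C_AbsRing) (V := C_NormedModule)).
  - apply exd_cexp.
  - apply exd_cexp_opp.
Qed.

Lemma exd_ccosh z : C_differentiable ccosh z.
Proof.
  unfold ccosh. apply exd_mult; [|apply exd_const].
  apply (ex_derive_plus (K := C_AbsRing) (V := C_NormedModule)).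
  - apply exd_cexp.
  - apply exd_cexp_opp.
Qed.

Lemma exd_F (f : C -> C) z : C_differentiable f (csinh z) ->
  C_differentiable (fun zeta => f (csinh zeta) * ccosh zeta)%C z.
Proof.
  intros Hf. apply exd_mult; [|apply exd_ccosh].
  apply (ex_derive_comp (K := C_AbsRing) (V := C_NormedModule) f csinh); [exact Hf|].
  destruct (exd_csinh z) as [l Hl]. exists l. apply tr1, Hl.
Qed.

Lemma ln_le' x y : 0 < x -> x <= y -> ln x <= ln y.
Proof. intros Hx [H|H]; [left; apply ln_increasing; lra| subst; lra]. Qed.

Lemma exp_le' x y : x <= y -> exp x <= exp y.
Proof. intros [H|H]; [left; apply exp_increasing; lra| subst; lra]. Qed.

Lemma key (K p q c A B M : R) : 0 < K -> 0 < p -> 0 < q -> 0 < c -> c <= 1 ->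
  c <= B -> B <= 2 -> 0 < A -> 0 < M -> M * M * 4 = A * B ->
  K * Rpower (M * M) (- (p + 1) / 2) * M <=
  Rpower 2 (Rmax p q) * K / Rpower c ((Rmax p q - Rmin p q) / 2)
    * Rpower A (- p / 2) * Rpower B (- q / 2).
Proof.
  intros HK Hp Hq Hc Hc1 HcB HB2 HA HM HMAB.
  assert (HB : 0 < B) by lra.
  unfold Rpower.
  assert (Hl : ln A + ln B = 2 * ln M + 2 * ln 2).
  { rewrite <- ln_mult by lra. rewrite <- HMAB.
    rewrite !ln_mult by nra. replace 4 with (2 * 2) by ring. rewrite ln_mult by lra. ring. }
  assert (Hl2 : 0 < ln 2) by (rewrite <- ln_1; apply ln_increasing; lra).
  assert (Hlc : ln c <= 0) by (rewrite <- ln_1; apply ln_le'; lra).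
  assert (HlcB : ln c <= ln B) by (apply ln_le'; lra).
  assert (HlB2 : ln B <= ln 2) by (apply ln_le'; lra).
  rewrite ln_mult by lra.
  rewrite <- (exp_ln M) at 3 by lra.
  rewrite Rmult_assoc, <- exp_plus.
  set (nu := Rmax p q). set (mu := Rmin p q).
  match goal with |- _ <= ?R =>
    replace R with (K * exp (nu * ln 2 + - ((nu - mu) / 2 * ln c) + (- p / 2 * ln A) + (- q / 2 * ln B))) end.
  2:{ rewrite !exp_plus, exp_Ropp. field. apply Rgt_not_eq, exp_pos. }
  apply Rmult_le_compat_l; [lra|]. apply exp_le'.
  destruct (Rle_dec p q) as [Hpq|Hpq].
  - unfold nu, mu. rewrite Rmax_right, Rmin_left by lra. nra.
  - unfold nu, mu. rewrite Rmax_left, Rmin_right by lra. nra.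
Qed.

Lemma cexp_0 : cexp (RtoC 0) = RtoC 1.
Proof. unfold cexp; simpl. rewrite exp_0, cos_0, sin_0. unfold RtoC. f_equal; ring. Qed.

Lemma cexp_opp_mul z : (cexp z * cexp (- z))%C = RtoC 1.
Proof. rewrite <- cexp_add. replace (z + - z)%C with (RtoC 0) by ring. apply cexp_0. Qed.

Lemma cosh_sinh z : (1 + csinh z * csinh z)%C = (ccosh z * ccosh z)%C.
Proof.
  unfold csinh, ccosh. rewrite <- (cexp_opp_mul z) at 1.
  field.
Qed.

Lemma cexp_m2 z : cexp (-2 * z)%C = (cexp (- z) * cexp (- z))%C.
Proof. rewrite <- cexp_add. f_equal. destruct z; unfold Cmult, Cplus, Copp; simpl. f_equal; ring. Qed.

Lemma cexp_2 z : cexp (2 * z)%C = (cexp z * cexp z)%C.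
Proof. rewrite <- cexp_add. f_equal. destruct z; unfold Cmult, Cplus, Copp; simpl. f_equal; ring. Qed.

Lemma cosh_AB z : (ccosh z * ccosh z * 4)%C = ((1 + cexp (-2 * z)) * (1 + cexp (2 * z)))%C.
Proof.
  rewrite cexp_m2, cexp_2. unfold ccosh.
  pose proof (cexp_opp_mul z) as H.
  set (u := cexp z) in *. set (v := cexp (- z)) in *.
  transitivity (u * u + v * v + 2 * (u * v))%C.
  { field. }
  rewrite H.
  transitivity (1 + v * v + u * u + (u * v) * (u * v))%C.
  2: ring.
  rewrite H. ring.
Qed.

Lemma Cmod_cosh z : Cmod (ccosh z) * Cmod (ccosh z) * 4 =
  Cmod (1 + cexp (-2 * z))%C * Cmod (1 + cexp (2 * z))%C.
Proof.
  rewrite <- !Cmod_mult, <- cosh_AB, !Cmod_mult.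
  replace (Cmod 4) with 4. reflexivity.
  rewrite Cmod_R, Rabs_right; lra.
Qed.

Lemma B_upper w : Cmod (1 + cexp (2 * w))%C <= 1 + exp (2 * Re w).
Proof.
  eapply Rle_trans; [apply Cmod_triangle|]. rewrite Cmod_1, Cmod_cexp.
  destruct w; simpl. right. f_equal. f_equal. ring.
Qed.

Lemma B_lower w : cos (Im w) <= Cmod (1 + cexp (2 * w))%C.
Proof.
  rewrite cexp_2. destruct w as [x y]. unfold cexp, Cmod, Cmult, Cplus; simpl.
  set (E := exp x). set (c := cos y). set (s := sin y).
  assert (Hsc : s * s + c * c = 1).
  { pose proof (sin2_cos2 y) as H. unfold Rsqr in H. exact H. }
  destruct (Rle_dec c 0) as [Hc|Hc].
  { eapply Rle_trans; [exact Hc| apply sqrt_pos]. }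
  apply Rle_trans with (sqrt (c^2)); [rewrite sqrt_pow2; lra| apply sqrt_le_1_alt].
  match goal with |- _ <= ?X =>
    assert (HX : X = c*c*(1+E*E)^2 + s*s*(1-E*E)^2 + (s*s+c*c-1)*((s*s+c*c)*(E*E)^2 - 1)) by ring end.
  rewrite HX, Hsc.
  assert (0 <= E * E) by nra.
  assert (c*c <= c*c*(1+E*E)^2) by nra.
  assert (0 <= s*s*(1-E*E)^2) by (apply Rmult_le_pos; [nra| apply pow2_ge_0]).
  nra.
Qed.

Lemma m2_eq z : (-2 * z)%C = (2 * (- z))%C.
Proof. destruct z; unfold Cmult, Copp, RtoC; simpl. f_equal; ring. Qed.

Lemma main_bound (d : R) (f : C -> C) (K alpha beta c : R) zeta :
  0 < K -> 0 < alpha -> 0 < beta ->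
  (forall zeta, strip_minus d zeta ->
     Cmod (f (csinh zeta)) <=
       K * Rpower (Cmod (1 + csinh zeta * csinh zeta)) (- (alpha + 1) / 2)) ->
  (forall zeta, strip_plus d zeta ->
     Cmod (f (csinh zeta)) <=
       K * Rpower (Cmod (1 + csinh zeta * csinh zeta)) (- (beta + 1) / 2)) ->
  strip d zeta -> 0 < c -> c <= 1 -> c <= cos (Im zeta) ->
  Cmod (f (csinh zeta) * ccosh zeta)%C <=
    Rpower 2 (Rmax alpha beta) * K / Rpower c ((Rmax alpha beta - Rmin alpha beta) / 2)
      * Rpower (Cmod (1 + cexp (-2 * zeta))) (- alpha / 2)
      * Rpower (Cmod (1 + cexp (2 * zeta))) (- beta / 2).
Proof.
  intros HK Ha Hb Hm Hp Hs Hc Hc1 Hcz.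
  set (A := Cmod (1 + cexp (-2 * zeta))%C).
  set (B := Cmod (1 + cexp (2 * zeta))%C).
  set (M := Cmod (ccosh zeta)).
  assert (HMAB : M * M * 4 = A * B) by apply Cmod_cosh.
  assert (HBl : c <= B) by (eapply Rle_trans; [exact Hcz| apply B_lower]).
  assert (HAl : c <= A).
  { unfold A. rewrite m2_eq. eapply Rle_trans; [|apply B_lower].
    destruct zeta as [x y]; simpl in *. rewrite cos_neg. exact Hcz. }
  assert (HBu : B <= 1 + exp (2 * Re zeta)) by apply B_upper.
  assert (HAu : A <= 1 + exp (2 * - Re zeta)).
  { unfold A. rewrite m2_eq. eapply Rle_trans; [apply B_upper|].
    destruct zeta as [x y]; simpl. lra. }
  assert (HM : 0 < M).
  { assert (0 <= M) by apply Cmod_ge_0. destruct H as [H|H]; [exact H|].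
    exfalso. rewrite <- H in HMAB. nra. }
  assert (Hsq : Cmod (1 + csinh zeta * csinh zeta)%C = M * M).
  { rewrite cosh_sinh, Cmod_mult. reflexivity. }
  rewrite Cmod_mult. fold M.
  destruct (Rlt_or_le (Re zeta) 0) as [Hr|Hr].
  - specialize (Hm zeta (conj Hs Hr)). rewrite Hsq in Hm.
    eapply Rle_trans; [apply Rmult_le_compat_r; [lra| exact Hm]|].
    apply key; try lra.
    assert (exp (2 * Re zeta) <= 1) by (rewrite <- exp_0; apply exp_le'; lra). lra.
  - specialize (Hp zeta (conj Hs Hr)). rewrite Hsq in Hp.
    eapply Rle_trans; [apply Rmult_le_compat_r; [lra| exact Hp]|].
    eapply Rle_trans; [apply (key K beta alpha c B A M); try lra|].
    + assert (exp (2 * - Re zeta) <= 1) by (rewrite <- exp_0; apply exp_le'; lra). lra.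
    + rewrite Rmax_comm, Rmin_comm. right. ring.
Qed.

Theorem lemma1 (d : R) (f : C -> C) (K alpha beta : R) :
  0 < d -> d < PI / 2 ->
  (forall z, (exists zeta, strip d zeta /\ z = csinh zeta) -> C_differentiable f z) ->
  0 < K -> 0 < alpha -> 0 < beta ->
  (forall zeta, strip_minus d zeta ->
     Cmod (f (csinh zeta)) <=
       K * Rpower (Cmod (1 + csinh zeta * csinh zeta)) (- (alpha + 1) / 2)) ->
  (forall zeta, strip_plus d zeta ->
     Cmod (f (csinh zeta)) <=
       K * Rpower (Cmod (1 + csinh zeta * csinh zeta)) (- (beta + 1) / 2)) ->
  LSE (Rpower 2 (Rmax alpha beta) * K
         / Rpower (cos d) ((Rmax alpha beta - Rmin alpha beta) / 2))
      (Rpower 2 (Rmax alpha beta) * K)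
      alpha beta d (fun zeta => (f (csinh zeta) * ccosh zeta)%C).
Proof.
  intros Hd0 Hd1 Hdiff HK Ha Hb Hm Hp.
  pose proof PI_RGT_0 as HPI.
  assert (Hcd : 0 < cos d) by (apply cos_gt_0; lra).
  split; [|split].
  - intros zeta Hz. apply exd_F. apply Hdiff. exists zeta. split; [exact Hz|reflexivity].
  - intros zeta Hz. apply (main_bound d); try assumption.
    + destruct (COS_bound d); lra.
    + unfold strip in Hz. destruct zeta as [x y]; simpl in *.
      assert (Hy : cos (Rabs y) = cos y).
      { unfold Rabs; destruct Rcase_abs; [apply cos_neg|reflexivity]. }
      rewrite <- Hy.
      destruct (Req_dec (Rabs y) d) as [He|He]; [lra|].
      left. apply cos_decreasing_1; try lra. apply Rabs_pos.
  - intros x.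
    assert (Hz : strip d (RtoC x)) by (unfold strip; simpl; rewrite Rabs_R0; lra).
    pose proof (main_bound d f K alpha beta 1 (RtoC x) HK Ha Hb Hm Hp Hz ltac:(lra) ltac:(lra)) as H.
    simpl in H. rewrite cos_0 in H. specialize (H ltac:(lra)).
    assert (H1 : forall t, Rpower 1 t = 1).
    { intros t; unfold Rpower. rewrite ln_1, Rmult_0_r. apply exp_0. }
    rewrite H1, Rdiv_1_r in H.
    assert (HA : forall k : R, Cmod (1 + cexp (k * RtoC x))%C = 1 + exp (k * x)).
    { intros k.
      replace (1 + cexp (k * RtoC x))%C with (RtoC (1 + exp (k * x))).
      - rewrite Cmod_R, Rabs_right; [reflexivity|]. pose proof (exp_pos (k*x)); lra.
      - unfold cexp, Cmult, Cplus, RtoC; simpl.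
        replace (k * x - 0 * 0) with (k * x) by ring.
        replace (k * 0 + 0 * x) with 0 by ring.
        rewrite cos_0, sin_0. f_equal; ring. }
    rewrite !HA in H. exact H.
Qed.
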